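(* Let $\mathcal P$ be a finite set with $|\mathcal P|=n$, $\kappa\in(0,1)$, $\lambda>0$, $\ell_1,\dots,\ell_T:\mathcal P\to[0,1]$, $\mu_1(i)=\kappa$ for all $i$, $\Gamma$ the set of $\kappa$-dense measures on $\mathcal P$, and $\mu_{T+1}=\Pi_\Gamma\tilde\mu_{T+1}$ with $\tilde\mu_{T+1}(i)=e^{-\lambda\sum_{t=1}^T\ell_t(i)}\mu_1(i)$. Writing $M(\hat\mu,Q_t)=\mathbb{E}_{i\sim\hat\mu}[\ell_t(i)]$, for all $T\ge1$, \[ \mu_{T+1}=\arg\min_{\mu\in\Gamma}\Big[\lambda|\mu|\sum_{t=1}^TM(\hat\mu,Q_t)+\mathrm{KL}(\mu\|\mu_1)\Big]. \]
   Context: A measure on $\mathcal P$ is $\mu:\mathcal P\to[0,1]$; $|\mu|=\sum_i\mu(i)$; $\kappa$-dense means $|\mu|/n\ge\kappa$; $\hat\mu=\mu/|\mu|$. $\mathrm{KL}(\mu_1\|\mu_2)=\sum_i\mu_1(i)\log(\mu_1(i)/\mu_2(i))+\mu_2(i)-\mu_1(i)$. $\Pi_\Gamma\tilde\mu=\arg\min_{\mu\in\Gamma}\mathrm{KL}(\mu\|\tilde\mu)$. $Q_t$ is the column strategy of round $t$, inducing loss vector $\ell_t$. *)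

(* Defs.v *)
From HB Require Import structures.
From mathcomp Require Import all_boot all_order all_algebra.
From mathcomp Require Import all_classical all_reals all_analysis.
Set Implicit Arguments. Unset Strict Implicit. Unset Printing Implicit Defensive.
Import Order.TTheory GRing.Theory Num.Theory.
Local Open Scope ring_scope.

Section Defs.
Variables (R : realType) (P : finType).

Definition is_measure (mu : P -> R) : Prop := forall i, 0 <= mu i <= 1.

Definition msize (mu : P -> R) : R := \sum_(i : P) mu i.

Definition dense (kappa : R) (mu : P -> R) : Prop :=
  msize mu / (#|P|%:R) >= kappa.

Definition Gamma (kappa : R) (mu : P -> R) : Prop :=
  is_measure mu /\ dense kappa mu.

Definition mhat (mu : P -> R) : P -> R := fun i => mu i / msize mu.

(* generalized KL divergence *)
Definition KL (mu1 mu2 : P -> R) : R :=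
  \sum_(i : P) (mu1 i * ln (mu1 i / mu2 i) + mu2 i - mu1 i).

Definition Mloss (muh : P -> R) (ell : P -> R) : R := \sum_(i : P) muh i * ell i.

Definition is_argmin (S : (P -> R) -> Prop) (F : (P -> R) -> R) (mu : P -> R) : Prop :=
  S mu /\ forall nu, S nu -> F mu <= F nu.

End Defs.

(* Main.v *)
Require Import Defs.
From HB Require Import structures.
From mathcomp Require Import all_boot all_order all_algebra.
From mathcomp Require Import all_classical all_reals all_analysis.
From mathcomp Require Import ring lra.
Import Order.TTheory GRing.Theory Num.Theory.
Local Open Scope ring_scope.

Lemma term_eq (R : realType) (kappa lambda L x : R) :
  0 < kappa -> 0 <= x ->
  x * ln (x / (expR (- lambda * L) * kappa)) + expR (- lambda * L) * kappa - x
  = lambda * x * L + (x * ln (x / kappa) + kappa - x)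
    + (expR (- lambda * L) * kappa - kappa).
Proof.
move=> k0 x0.
have -> : x / (expR (- lambda * L) * kappa) = (x / kappa) * expR (lambda * L).
  rewrite mulNr expRN invfM invrK; field.
  by rewrite gt_eqF.
case: (ltrgtP x 0) => [|xp|->]; first by rewrite ltNge x0.
  rewrite lnM ?expRK; last 2 first.
  - by rewrite posrE divr_gt0.
  - by rewrite posrE expR_gt0.
  by rewrite mulrDr; lra.
by rewrite !mul0r !mulr0 !mul0r; lra.
Qed.

Theorem mainTheorem7 (R : realType) (P : finType) (kappa lambda : R) (T : nat)
  (ell : 'I_T -> P -> R) :
  0 < kappa < 1 -> 0 < lambda -> (0 < T)%N ->
  (forall t i, 0 <= ell t i <= 1) ->
  let mu1 : P -> R := fun _ => kappa in
  let mutilde : P -> R :=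
    fun i => expR (- lambda * \sum_(t < T) ell t i) * mu1 i in
  forall mu : P -> R,
    is_argmin (Gamma kappa) (fun nu => KL nu mutilde) mu <->
    is_argmin (Gamma kappa)
      (fun nu => lambda * msize nu * \sum_(t < T) Mloss (mhat nu) (ell t)
                 + KL nu mu1) mu.
Proof.
move=> /andP[k0 k1] l0 T0 hell mu1 mutilde mu.
set C := \sum_(i : P) (mutilde i - kappa).
have key : forall nu, Gamma kappa nu ->
  KL nu mutilde = lambda * msize nu * \sum_(t < T) Mloss (mhat nu) (ell t)
                 + KL nu mu1 + C.
  move=> nu [hm hd].
  have s0 : msize nu != 0.
    apply/negP => /eqP hs; move: hd; rewrite /Defs.dense /msize; rewrite /msize in hs; rewrite hs mul0r => h.
    by move: (lt_le_trans k0 h); rewrite ltxx.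
  have -> : lambda * msize nu * \sum_(t < T) Mloss (mhat nu) (ell t)
      = \sum_(i : P) lambda * nu i * \sum_(t < T) ell t i.
    rewrite /Mloss /mhat exchange_big /= mulr_sumr; apply: eq_bigr => i _.
    by rewrite -mulr_sumr; field.
  rewrite /Defs.KL /C; rewrite -!big_split /=; apply: eq_bigr => i _.
  rewrite /mutilde /mu1; apply: term_eq => //.
  by case/andP: (hm i).
split=> -[hG hmin]; split=> // nu hnu.
- have := hmin nu hnu; by rewrite (key _ hG) (key _ hnu) lerD2r.
- have := hmin nu hnu; by rewrite (key _ hG) (key _ hnu) lerD2r.
Qed.
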